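(* Let $\Gamma$ be a pre-automatic structure with generating alphabet $A$, and suppose that $\sigma : A^* \to S$ and $\tau : A^* \to T$ are interpretations of $\Gamma$ with respect to semigroups $S$ and $T$ respectively. Then $S$ and $T$ are isomorphic.
   Context: Let $A$ be a finite alphabet, $\$ \notin A$ a new symbol, $A^\$ = A\cup\{\$\}$. Define $\delta : A^*\times A^* \to (A^\$\times A^\$)^*$ by padding the shorter word on the right with $\$$ and reading the two words letter by letter as a word of pairs: for $a_i,b_j\in A$, $\delta(a_1\cdots a_m,b_1\cdots b_n)=(a_1,b_1)\cdots(a_m,b_m)(\$,b_{m+1})\cdots(\$,b_n)$ if $m<n$, $(a_1,b_1)\cdots(a_m,b_m)$ if $m=n$, and $(a_1,b_1)\cdots(a_n,b_n)(a_{n+1},\$)\cdots(a_m,\$)$ if $m>n$. A synchronous automaton over $A$ is a finite automaton over the alphabet $A^\$\times A^\$$; it recognises a relation $R\subseteq A^*\times A^*$ if the language it accepts is exactly $\delta(R)$. A pre-automatic structure $\Gamma$ consists of: a finite alphabet $A$ of generators; a finite automaton recognising a language $L\subseteq A^*$ (the language of representatives); a synchronous automaton recognising a relation $L_=\subseteq L\times L$; and for each $a\in A$ a synchronous automaton recognising a relation $L_a\subseteq L\times L$. An interpretation of $\Gamma$ with respect to a semigroup $S$ is a morphism $\sigma : A^*\to S$ such that (i) $\sigma(L)=S$; (ii) for $u,v\in L$, $(u,v)\in L_=$ iff $\sigma(u)=\sigma(v)$; (iii) for each $a\in A$ and $u,v\in L$, $(u,v)\in L_a$ iff $\sigma(ua)=\sigma(v)$.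 *)

(* Defs.v *)
From mathcomp Require Import all_boot.
Set Implicit Arguments. Unset Strict Implicit. Unset Printing Implicit Defensive.

Record dfa (X : finType) := Dfa {
  dfa_state : finType;
  dfa_init : dfa_state;
  dfa_final : pred dfa_state;
  dfa_trans : dfa_state -> X -> dfa_state }.

Definition accepts (X : finType) (M : dfa X) (w : seq X) : bool :=
  @dfa_final X M (foldl (@dfa_trans X M) (@dfa_init X M) w).

(* A^$ = option A, with None playing the role of the padding symbol $. *)
Definition padsym (A : finType) : finType := option A.
Definition pairsym (A : finType) : finType := (option A * option A)%type.

Definition pad (A : Type) (n : nat) (w : seq A) : seq (option A) :=
  map Some w ++ nseq (n - size w) None.

Definition delta (A : finType) (u v : seq A) : seq (pairsym A) :=
  let n := maxn (size u) (size v) in zip (pad n u) (pad n v).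

Definition recognises_rel (A : finType) (M : dfa (pairsym A))
  (R : seq A -> seq A -> Prop) : Prop :=
  forall w, accepts M w <-> exists u v, R u v /\ w = delta u v.

Record pre_automatic (A : finType) := PreAutomatic {
  L_aut : dfa A;
  Leq_aut : dfa (pairsym A);
  Lgen_aut : A -> dfa (pairsym A);
  Leq : seq A -> seq A -> Prop;
  Lgen : A -> seq A -> seq A -> Prop;
  Leq_rec : recognises_rel Leq_aut Leq;
  Lgen_rec : forall a, recognises_rel (Lgen_aut a) (Lgen a);
  Leq_sub : forall u v, Leq u v -> accepts L_aut u /\ accepts L_aut v;
  Lgen_sub : forall a u v, Lgen a u v -> accepts L_aut u /\ accepts L_aut v }.

Definition inL (A : finType) (G : pre_automatic A) (u : seq A) : bool :=
  accepts (L_aut G) u.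

Definition morphism_from_words (A : Type) (S : Type) (mulS : S -> S -> S)
  (sigma : seq A -> S) : Prop :=
  forall u v, sigma (u ++ v) = mulS (sigma u) (sigma v).

Definition interpretation (A : finType) (G : pre_automatic A)
  (S : Type) (mulS : S -> S -> S) (sigma : seq A -> S) : Prop :=
  [/\ morphism_from_words mulS sigma,
      (forall s, exists2 u, inL G u & sigma u = s),
      (forall u v, inL G u -> inL G v -> (Leq G u v <-> sigma u = sigma v))
    &
      (forall a u v, inL G u -> inL G v ->
         (Lgen G a u v <-> sigma (rcons u a) = sigma v))].

Definition semigroup_iso (S T : Type) (mulS : S -> S -> S) (mulT : T -> T -> T)
  (f : S -> T) : Prop :=
  bijective f /\ forall x y, f (mulS x y) = mulT (f x) (f y).

(* Main.v *)
Require Import Defs.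
From mathcomp Require Import all_boot.
From Stdlib Require Import ClassicalEpsilon.

Section Aux.
Variables (A : finType) (G : pre_automatic A)
  (S : Type) (mulS : S -> S -> S) (T : Type) (mulT : T -> T -> T)
  (sigma : seq A -> S) (tau : seq A -> T)
  (Hsigma : interpretation G mulS sigma)
  (Htau : interpretation G mulT tau).

Lemma pick_ex (s : S) : exists u, inL G u /\ sigma u = s.
Proof. case: Hsigma => _ H _ _. by case: (H s) => u; exists u. Qed.

Definition pk (s : S) : seq A := proj1_sig (constructive_indefinite_description _ (pick_ex s)).

Lemma pkP s : inL G (pk s) /\ sigma (pk s) = s.
Proof. rewrite /pk; case: constructive_indefinite_description => //. Qed.

Definition F (s : S) : T := tau (pk s).

Lemma F_L u : inL G u -> F (sigma u) = tau u.
Proof.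
move=> Lu; rewrite /F. case: (pkP (sigma u)) => L1 E1.
case: Hsigma => _ _ Hs _; case: Htau => _ _ Ht _.
apply/(Ht _ _ L1 Lu); apply/(Hs _ _ L1 Lu); exact E1.
Qed.

Lemma F_word u w : inL G u -> F (sigma (u ++ w)) = tau (u ++ w).
Proof.
move=> Lu; elim/last_ind: w => [|w a IH]; first by rewrite cats0 F_L.
case: Hsigma => ms _ _ Hs3; case: Htau => mt _ _ Ht3.
case: (pkP (sigma (u ++ w))) => Lv Ev.
set v := pk _ in Lv Ev.
have Tv : tau v = tau (u ++ w) by rewrite -IH -Ev F_L.
case: (pkP (sigma (rcons v a))) => Lv' Ev'.
set v' := pk _ in Lv' Ev'.
have Hg : Lgen G a v v' by apply/(Hs3 _ _ _ Lv Lv').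
have Ht : tau (rcons v a) = tau v' by apply/(Ht3 _ _ _ Lv Lv').
have -> : sigma (u ++ rcons w a) = sigma v'.
  by rewrite Ev' -!cats1 catA [LHS]ms [RHS]ms Ev.
by rewrite F_L // -Ht -!cats1 catA [LHS]mt [RHS]mt Tv.
Qed.

Lemma F_mul x y : F (mulS x y) = mulT (F x) (F y).
Proof.
case: (pkP x) => Lu Eu; case: (pkP y) => Lv Ev.
case: Hsigma => ms _ _ _; case: Htau => mt _ _ _.
rewrite -Eu -Ev -ms F_word // !F_L // mt //.
Qed.
End Aux.

Theorem proposition2p3 (A : finType) (G : pre_automatic A)
  (S : Type) (mulS : S -> S -> S) (assocS : associative mulS)
  (T : Type) (mulT : T -> T -> T) (assocT : associative mulT)
  (sigma : seq A -> S) (tau : seq A -> T)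
  (Hsigma : interpretation G mulS sigma)
  (Htau : interpretation G mulT tau) :
  exists f : S -> T, semigroup_iso mulS mulT f.
Proof.
exists (@F A G S mulS T sigma tau Hsigma); split; last first.
  by move=> x y; apply: (F_mul _ _ _ _ _ _ _ _ Hsigma Htau).
exists (@F A G T mulT S tau sigma Htau).
- move=> x; case: (pkP _ _ _ _ _ Hsigma x) => Lu Eu.
  by rewrite -Eu (F_L _ _ _ _ _ _ _ _ Hsigma Htau _ Lu) (F_L _ _ _ _ _ _ _ _ Htau Hsigma _ Lu).
- move=> y; case: (pkP _ _ _ _ _ Htau y) => Lu Eu.
  by rewrite -Eu (F_L _ _ _ _ _ _ _ _ Htau Hsigma _ Lu) (F_L _ _ _ _ _ _ _ _ Hsigma Htau _ Lu).
Qed.
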